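(* For $k\ge4$ let $\iota_k=\lfloor k^{1/3}\rfloor$ and $$A(k)=\sum_{j=4}^{k-\iota_k-1}j\,s_j\,\tilde\tau_k^{\,j-1}.$$ Then $A(k)=\mathcal{O}(k^{-3})$ as $k\to\infty$.
   Context: Let $s_j$ be the number of simple permutations of size $j$. A permutation is simple if its only intervals (factors whose value set is a set of consecutive integers) are the singletons and the whole permutation, with the convention that the permutations of sizes $1$ and $2$ are not simple. For $k\ge4$, let $$\Lambda_k(x)=\frac{x^2}{1-x}+\sum_{j=4}^k s_j\left(\frac{x}{1-x}\right)^j\qquad(0\le x<1).$$ Let $\tau_k$ be the unique solution in $(0,1)$ of $\Lambda_k'(x)=1$, and set $$\tilde\tau_k=\frac{\tau_k}{1-\tau_k}.$$ *)

(* Defs.v *)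
From mathcomp Require Import all_boot all_fingroup.
From Stdlib Require Import Reals.

Set Implicit Arguments.
Unset Strict Implicit.
Unset Printing Implicit Defensive.

(* Permutations of size n are elements of 'S_n, acting on positions/values
   {0,...,n-1}.  (Positions p >= n never occur below since i + l <= n.)
   The factor of [sg] starting at position [i] of length [l]
   is the list of values sg(i), ..., sg(i+l-1). *)
Definition factor_vals (n : nat) (sg : 'S_n) (i l : nat) : seq nat :=
  [seq (if insub p is Some q then nat_of_ord (sg q) else 0) | p <- iota i l].

(* A list of values is an interval if its value set is a set of consecutive
   integers {a, a+1, ..., a+l-1}, l being its length (values are distinct
   for a permutation, and all < n, so a < n). *)
Definition is_interval_vals (n : nat) (s : seq nat) : bool :=
  has (fun a => perm_eq s (iota a (size s))) (iota 0 n).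

(* sg is simple: its size is at least 3 (sizes 1 and 2 are not simple by
   convention) and its only intervals are singletons and the whole
   permutation, i.e. no factor of length l with 2 <= l < n is an interval. *)
Definition simpleb (n : nat) (sg : 'S_n) : bool :=
  (3 <= n) &&
  [forall i : 'I_n.+1, forall l : 'I_n,
     ((2 <= l) && (i + l <= n)) ==> ~~ is_interval_vals n (factor_vals sg i l)].

Definition s_num (j : nat) : nat := #|[set sg : 'S_j | simpleb sg]|.

Open Scope R_scope.

Definition Lambda (k : nat) (x : R) : R :=
  x ^ 2 / (1 - x) +
  List.fold_right Rplus 0
    (List.map (fun j => INR (s_num j) * (x / (1 - x)) ^ j)
              (List.seq 4 (k - 3))).

Definition tilde (t : R) : R := t / (1 - t).

Definition iota_k (k : nat) : nat :=
  Z.to_nat (Int_part (Rpower (INR k) (1 / 3))).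

(* A(k) = sum_{j=4}^{k - iota_k - 1} j s_j tilde(tau_k)^(j-1)
   (empty sum if k - iota_k - 1 < 4); List.seq 4 m = [4; ...; m+3]. *)
Definition A_k (tau : nat -> R) (k : nat) : R :=
  List.fold_right Rplus 0
    (List.map (fun j => INR j * INR (s_num j) * tilde (tau k) ^ (j - 1))
              (List.seq 4 (k - iota_k k - 4))).

(* Main.v *)
Require Import Defs.
From Stdlib Require Import Reals Lra ZArith.
From mathcomp Require Import all_boot all_fingroup zify.
Set Implicit Arguments. Unset Strict Implicit. Unset Printing Implicit Defensive.
Open Scope nat_scope.

Definition Fv n (sg : 'S_n) (p : nat) : nat :=
  if insub p is Some q then nat_of_ord (sg q) else 0.

Lemma factor_valsE n (sg : 'S_n) i l : factor_vals sg i l = map (Fv sg) (iota i l).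
Proof. by []. Qed.

Lemma Fv_ord n (sg : 'S_n) (q : 'I_n) : Fv sg q = sg q.
Proof. by rewrite /Fv valK. Qed.

Lemma Fv_lt n (sg : 'S_n) p : p < n -> Fv sg p < n.
Proof. by move=> hp; rewrite -[p]/(val (Ordinal hp)) Fv_ord. Qed.

Lemma Fv_inj n (sg : 'S_n) p q : p < n -> q < n -> Fv sg p = Fv sg q -> p = q.
Proof.
move=> hp hq; rewrite -[p]/(val (Ordinal hp)) -[q]/(val (Ordinal hq)) !Fv_ord.
by move/val_inj/perm_inj => ->.
Qed.

Lemma Fv_surj n (sg : 'S_n) v : v < n -> exists2 p, p < n & Fv sg p = v.
Proof.
move=> hv; exists (val ((sg^-1)%g (Ordinal hv))); first exact: ltn_ord.
by rewrite Fv_ord permKV.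
Qed.

Lemma pigeon (f : nat -> nat) i l a l' :
  (forall p q, i <= p < i + l -> i <= q < i + l -> f p = f q -> p = q) ->
  (forall p, i <= p < i + l -> a <= f p < a + l') -> l <= l'.
Proof.
move=> finj fr.
have U : uniq (map f (iota i l)).
  rewrite map_inj_in_uniq ?iota_uniq // => p q; rewrite !mem_iota; exact: finj.
have S : {subset map f (iota i l) <= iota a l'}.
  move=> v /mapP [p]; rewrite mem_iota => /fr hp ->; rewrite mem_iota; lia.
by have := uniq_leq_size U S; rewrite size_map !size_iota.
Qed.

Definition is_int n (sg : 'S_n) i l :=
  exists a, forall p, i <= p < i + l -> a <= Fv sg p < a + l.

Lemma intervalP n (sg : 'S_n) i l : i + l <= n -> 0 < l ->
  reflect (is_int sg i l) (is_interval_vals n (factor_vals sg i l)).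
Proof.
move=> hil hl; rewrite factor_valsE /is_interval_vals size_map size_iota.
apply: (iffP hasP).
  move=> [a _ /perm_mem hp]; exists a => p hpr.
  have : Fv sg p \in iota a l by rewrite -hp; apply: map_f; rewrite mem_iota.
  by rewrite mem_iota.
move=> [a ha]; exists a.
  have := ha i; have := Fv_lt sg (_ : i < n); rewrite mem_iota; lia.
have U : uniq (map (Fv sg) (iota i l)).
  rewrite map_inj_in_uniq ?iota_uniq // => p q; rewrite !mem_iota => hp hq.
  apply: Fv_inj; lia.
have S : {subset map (Fv sg) (iota i l) <= iota a l}.
  move=> v /mapP [p]; rewrite mem_iota => /ha hp ->; rewrite mem_iota; lia.
apply: uniq_perm => //; first exact: iota_uniq.
by have [] := uniq_min_size U S; rewrite ?size_map ?size_iota.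
Qed.

Lemma simpleP n (sg : 'S_n) : simpleb sg <->
  (3 <= n /\ forall i l, 2 <= l -> l < n -> i + l <= n -> ~ is_int sg i l).
Proof.
rewrite /simpleb; split.
  move/andP=> [h3 /forallP H]; split=> // i l hl hln hil hint.
  have hi : i < n.+1 by lia.
  move: (H (Ordinal hi)) => /forallP /(_ (Ordinal hln)) /implyP.
  rewrite /= hl hil => /(_ isT) /negP; apply; apply/intervalP => //; lia.
move=> [h3 H]; rewrite h3 /=; apply/forallP => i; apply/forallP => l.
apply/implyP => /andP [hl hil]; apply/negP => /intervalP.
move=> /(_ hil) hh; apply: (H i l hl (ltn_ord l) hil); apply: hh; lia.
Qed.

Lemma Fv_lift n (s : 'S_n) (y : 'I_n.+1) p : p < n.+1 ->
  Fv (lift_perm ord0 y s) p = if p == 0 then val y else bump y (Fv s p.-1).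
Proof.
case: p => [|q] hq.
  by rewrite -[0]/(val (@ord0 n)) Fv_ord lift_perm_id.
have hq' : q < n by [].
rewrite (_ : q.+1 = val (lift ord0 (Ordinal hq'))) // Fv_ord lift_perm_lift /=.
by rewrite -[q]/(val (Ordinal hq')) Fv_ord.
Qed.

Lemma bumpE y v : bump y v = if y <= v then v.+1 else v.
Proof. by rewrite /bump; case: leqP => //= _; rewrite add1n. Qed.

Lemma lift_simple n (s : 'S_n) (y : 'I_n.+1) : simpleb s ->
  val y \notin [:: Fv s 0; (Fv s 0).+1; 0; n] -> simpleb (lift_perm ord0 y s).
Proof.
move=> /simpleP [h3 Hs] hy; apply/simpleP; split; first lia.
have yn := ltn_ord y.
move: hy; rewrite !inE => hy.
have [y0 y1 y2 y3] : [/\ nat_of_ord y <> Fv s 0, nat_of_ord y <> (Fv s 0).+1,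
    nat_of_ord y <> 0 & nat_of_ord y <> n].
  by move: hy; case: eqP; case: eqP; case: eqP; case: eqP.
move=> i l hl hln hil [a ha].
have gE := @Fv_lift n s y.
case: i hil ha => [|i] hil ha.
- have hy' : a <= y < a + l.
    have h : a <= Fv (lift_perm ord0 y s) 0 < a + l by apply: ha; lia.
    by rewrite gE in h.
  have hf : forall p, 0 <= p < 0 + l.-1 -> a <= Fv s p < a + l.-1.
    move=> p hp.
    have h : a <= Fv (lift_perm ord0 y s) p.+1 < a + l by apply: ha; lia.
    rewrite gE /= ?bumpE in h; last lia.
    case: (leqP y (Fv s p)) h => hh h; lia.
  case: (ltnP 2 l) => hl3.
    by apply: (Hs 0 l.-1) => //; [lia | lia | lia | exists a].
  have l2 : l = 2 by lia.
  have := hf 0; rewrite l2 /= => /(_ isT) hf0.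
  lia.
- have hf : forall p, i <= p < i + l -> a <= bump y (Fv s p) < a + l.
    move=> p hp.
    have h : a <= Fv (lift_perm ord0 y s) p.+1 < a + l by apply: ha; lia.
    by rewrite gE /= in h; last lia.
  case: (ltnP l n) => hln'.
  + case: (ltnP y a) => hya.
      apply: (Hs i l hl hln' (_ : i + l <= n)); first lia; exists a.-1 => p hp.
      have := hf p hp; rewrite bumpE; case: (leqP y (Fv s p)) => hh; lia.
    case: (leqP (a + l) y) => hya2.
      apply: (Hs i l hl hln' (_ : i + l <= n)); first lia; exists a => p hp.
      have := hf p hp; rewrite bumpE; case: (leqP y (Fv s p)) => hh; lia.
    have : l <= l.-1; last lia.
    apply: (@pigeon (Fv s) i l a).
      move=> p q hp hq; apply: Fv_inj; lia.
    move=> p hp; have := hf p hp; rewrite bumpE; case: (leqP y (Fv s p)) => hh; lia.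
  + have ln : l = n by lia.
    have i0 : i = 0 by lia.
    have [p0 hp0 fp0] : exists2 p, p < n & Fv s p = 0 by apply: Fv_surj; lia.
    have [p1 hp1 fp1] : exists2 p, p < n & Fv s p = n.-1 by apply: Fv_surj; lia.
    have h0 := hf p0; have h1 := hf p1.
    rewrite fp0 !bumpE in h0; rewrite fp1 !bumpE in h1.
    move: h0 h1; case: (leqP y 0); case: (leqP y n.-1); lia.
Qed.

Lemma card_bad m (bs : seq nat) : #|[pred y : 'I_m | val y \in bs]| <= size bs.
Proof.
rewrite cardE -(size_map val).
apply: uniq_leq_size; first by rewrite map_inj_uniq ?enum_uniq //; apply: val_inj.
by move=> v /mapP [y]; rewrite mem_enum inE => h ->.
Qed.

Lemma card_good m (bs : seq nat) :
  m - size bs <= #|[set y : 'I_m | val y \notin bs]|.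
Proof.
have hb : #|[set y : 'I_m | val y \in bs]| <= size bs.
  apply: leq_trans (card_bad m bs); apply: subset_leq_card.
  by apply/subsetP => y; rewrite !inE.
have := cardsC [set y : 'I_m | val y \in bs]; rewrite card_ord.
have -> : ~: [set y : 'I_m | val y \in bs] = [set y : 'I_m | val y \notin bs].
  by apply/setP => y; rewrite !inE.
lia.
Qed.

Definition Sset n := [set sg : 'S_n | simpleb sg].

Lemma s_rec n : (n - 3) * s_num n <= s_num n.+1.
Proof.
pose bad (sg : 'S_n) := [:: Fv sg 0; (Fv sg 0).+1; 0; n].
pose D := [set p : 'S_n * 'I_n.+1 | simpleb p.1 && (val p.2 \notin bad p.1)].
pose phi (p : 'S_n * 'I_n.+1) := lift_perm ord0 p.2 p.1.
have phi_inj : injective phi.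
  move=> [s1 y1] [s2 y2]; rewrite /phi /= => h.
  have hy : y1 = y2 by have := lift_perm_id ord0 y1 s1; rewrite h lift_perm_id.
  subst y2; congr (_, _); apply/permP => k.
  have := lift_perm_lift ord0 y1 s1 k; rewrite h lift_perm_lift.
  by move/lift_inj.
have h1 : #|D| <= s_num n.+1.
  rewrite -(card_imset D phi_inj) /s_num; apply: subset_leq_card.
  apply/subsetP => _ /imsetP [[sg y] hp ->]; rewrite inE.
  move: hp; rewrite inE /= => /andP [hs hb]; exact: lift_simple.
apply: leq_trans h1.
rewrite -sum1dep_card.
rewrite -(pair_big_dep (fun sg : 'S_n => simpleb sg)
            (fun sg (y : 'I_n.+1) => val y \notin bad sg) (fun _ _ => 1)) /=.
rewrite mulnC /s_num -sum_nat_cond_const.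
apply: leq_sum => sg _; rewrite sum1dep_card.
exact: (card_good n.+1 (bad sg)).
Qed.

Lemma s_num_le n : s_num n <= n`!.
Proof. by rewrite /s_num -card_Sn; apply: subset_leq_card; apply/subsetP. Qed.

Lemma simple_of_list n (sg : 'S_n) s :
  (forall p, p < n -> Fv sg p = nth 0 s p) -> 3 <= n ->
  all (fun i => all (fun l => ~~((2 <= l) && (i + l <= n)) ||
        ~~ is_interval_vals n (map (nth 0 s) (iota i l))) (iota 0 n)) (iota 0 n.+1) ->
  simpleb sg.
Proof.
move=> hF h3 /allP H; rewrite /simpleb h3 /=.
apply/forallP => i; apply/forallP => l; apply/implyP => hil.
have := H i; rewrite mem_iota ltn_ord => /(_ isT) /allP /(_ l).
rewrite mem_iota ltn_ord hil /= => /(_ isT).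
rewrite factor_valsE (_ : map (Fv sg) (iota i l) = map (nth 0 s) (iota i l)) //.
apply/eq_in_map => p; rewrite mem_iota => hp; apply: hF.
move/andP: hil => [_ hil]; lia.
Qed.

Definition p2413 : 'I_4 -> 'I_4 := fun i => inord (nth 0 [:: 1; 3; 0; 2] i).

Lemma p2413_inj : injective p2413.
Proof.
move=> i j; rewrite /p2413 => /(congr1 (@nat_of_ord 4)).
case: i => [[|[|[|[|?]]]] hi] //; case: j => [[|[|[|[|?]]]] hj] //;
  rewrite /= ?inordK //= => h; by apply: val_inj.
Qed.

Lemma s4_pos : 0 < s_num 4.
Proof.
rewrite /s_num card_gt0; apply/set0Pn; exists (perm p2413_inj); rewrite inE.
apply: (@simple_of_list 4 _ [:: 1; 3; 0; 2]) => //.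
move=> p hp; rewrite -[p]/(val (Ordinal hp)) Fv_ord permE /p2413 inordK //.
by case: p hp => [|[|[|[|?]]]].
Qed.

Lemma s_lower k : 4 <= k -> (k - 4)`! <= s_num k.
Proof.
elim: k => [|k IH] // hk.
case: (ltnP k 4) => hk4.
  have -> : k = 3 by lia.
  by have := s4_pos.
have := s_rec k; have := IH hk4.
rewrite (_ : k.+1 - 4 = (k - 4).+1); last lia.
rewrite factS (_ : (k - 4).+1 = k - 3); last lia.
move=> h1 h2; apply: leq_trans h2; rewrite leq_mul2l; apply/orP; right.
exact: h1.
Qed.

Open Scope R_scope.

Lemma fold_deriv (l : list nat) (c : nat -> R) (g : R -> R) x g' :
  derivable_pt_lim g x g' ->
  derivable_pt_lim (fun y => List.fold_right Rplus 0 (List.map (fun j => c j * g y ^ j) l)) x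
   (List.fold_right Rplus 0 (List.map (fun j => c j * (INR j * g x ^ Nat.pred j * g')) l)).
Proof.
move=> hg; elim: l => [|a l IH] /=.
  exact: (derivable_pt_lim_const 0).
apply: (derivable_pt_lim_plus (fun y => c a * g y ^ a)) => //.
apply: (derivable_pt_lim_scal (fun y => g y ^ a)).
apply: (derivable_pt_lim_comp g (fun z => z ^ a)) => //.
exact: derivable_pt_lim_pow.
Qed.

Lemma fold_scal (l : list nat) (f : nat -> R) a :
  List.fold_right Rplus 0 (List.map (fun j => a * f j) l) =
  a * List.fold_right Rplus 0 (List.map f l).
Proof. elim: l => [|b l IH] /=; [ring | rewrite IH; ring]. Qed.

Lemma fold_ext (l : list nat) (f g : nat -> R) :
  (forall j, f j = g j) ->
  List.fold_right Rplus 0 (List.map f l) = List.fold_right Rplus 0 (List.map g l).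
Proof. move=> h; elim: l => [|b l IH] //=; by rewrite IH h. Qed.

Lemma key_identity k t : 0 < t < 1 -> derivable_pt_lim (Lambda k) t 1 ->
  List.fold_right Rplus 0 (List.map (fun j => INR j * INR (s_num j) * tilde t ^ (j - 1))
     (List.seq 4 (k - 3))) = 1 - 4*t + 2*t^2.
Proof.
move=> ht hd.
have h1t : 1 - t <> 0 by lra.
have hg : derivable_pt_lim (fun y => y / (1 - y)) t
            ((1 * (1 - t) - (-1) * t) / (1 - t)²).
  apply: (derivable_pt_lim_div id (fun y => 1 - y)) => //.
    exact: derivable_pt_lim_id.
  have := derivable_pt_lim_minus (fun _ => 1) id t 0 1
    (derivable_pt_lim_const 1 t) (derivable_pt_lim_id t).
  by rewrite Rminus_0_l.
have h0 : derivable_pt_lim (fun y => y ^ 2 / (1 - y)) t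
            (((INR 2 * t ^ 1) * (1 - t) - (-1) * t ^ 2) / (1 - t)²).
  apply: (derivable_pt_lim_div (fun y => y ^ 2) (fun y => 1 - y)) => //.
    exact: derivable_pt_lim_pow.
  have := derivable_pt_lim_minus (fun _ => 1) id t 0 1
    (derivable_pt_lim_const 1 t) (derivable_pt_lim_id t).
  by rewrite Rminus_0_l.
have hf := fold_deriv (List.seq 4 (k - 3)) (fun j => INR (s_num j)) hg.
have hL := derivable_pt_lim_plus _ _ t _ _ h0 hf.
have E := uniqueness_limite (Lambda k) t _ _ hd hL.
rewrite (@fold_ext _ (fun j => INR (s_num j) *
   (INR j * (t / (1 - t)) ^ Nat.pred j * ((1 * (1 - t) - -1 * t) / (1 - t)²)))
   (fun j => ((1 * (1 - t) - -1 * t) / (1 - t)²) * (INR j * INR (s_num j) * tilde t ^ (j - 1)))) in E.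
  rewrite fold_scal in E.
  move: E; set S := List.fold_right _ _ _ => E.
  have Ec : (1 * (1 - t) - -1 * t) / (1 - t)² = / (1 - t)^2.
    by rewrite /Rsqr; field.
  have E0 : (INR 2 * t ^ 1 * (1 - t) - -1 * t ^ 2) / (1 - t)² = (2*t - t^2) * / (1 - t)^2.
    by rewrite /Rsqr /=; field.
  rewrite Ec E0 in E.
  have hu : / (1 - t)^2 * (1 - t)^2 = 1 by field.
  move: E hu; set u := / (1 - t)^2 => E hu.
  have : S = S * (u * (1 - t)^2) by rewrite hu; ring.
  move=> ->.
  have -> : S * (u * (1 - t) ^ 2) = (u * S) * (1 - t)^2 by ring.
  have -> : u * S = 1 - (2 * t - t ^ 2) * u by lra.
  have -> : (1 - (2 * t - t ^ 2) * u) * (1 - t) ^ 2 =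
     (1 - t)^2 - (2 * t - t ^ 2) * (u * (1 - t) ^ 2) by ring.
  rewrite hu; ring.
move=> j; rewrite /tilde (_ : (j - 1)%nat = Nat.pred j); [ring | lia].
Qed.

Open Scope R_scope.

Lemma exp_pow_nat a n : exp a ^ n = exp (INR n * a).
Proof.
elim: n => [|n IH]; first by rewrite /= Rmult_0_l exp_0.
rewrite S_INR [exp a ^ _]/= IH -exp_plus; congr exp; ring.
Qed.

Lemma INR_fact_S n : INR ((n.+1)`!) = INR n.+1 * INR (n`!).
Proof. by rewrite factS -multE mult_INR. Qed.

Lemma pow_ratio_le n : (1 <= n)%nat -> INR n.+1 ^ n <= exp 1 * INR n ^ n.
Proof.
move=> hn.
have hn' : 0 < INR n by apply: lt_0_INR; lia.
have h1 : INR n.+1 = INR n * (1 + / INR n) by rewrite S_INR; field; lra.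
rewrite h1 Rpow_mult_distr Rmult_comm.
apply: Rmult_le_compat_r; first by apply: pow_le; lra.
have : (1 + / INR n) ^ n <= exp (/ INR n) ^ n.
  apply: pow_incr; split; last exact: exp_ineq1_le.
  have := Rinv_0_lt_compat _ hn'; lra.
rewrite exp_pow_nat (_ : INR n * / INR n = 1) //; field; lra.
Qed.

Lemma pow_ratio_ge n : (1 <= n)%nat -> exp 1 * INR n ^ n.+1 <= INR n.+1 ^ n.+1.
Proof.
move=> hn.
have hn' : 0 < INR n by apply: lt_0_INR; lia.
have hn1 : 0 < INR n.+1 by apply: lt_0_INR; lia.
have h1 : INR n.+1 = INR n * (INR n.+1 / INR n) by field; lra.
rewrite [X in _ <= X ^ _]h1 Rpow_mult_distr Rmult_comm.
apply: Rmult_le_compat_l; first by apply: pow_le; lra.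
have he : exp (/ INR n.+1) <= INR n.+1 / INR n.
  have := exp_ineq1_le (- / INR n.+1); rewrite exp_Ropp => h.
  have hp : 0 < exp (/ INR n.+1) := exp_pos _.
  have hq : 1 + - / INR n.+1 = INR n / INR n.+1 by rewrite S_INR; field; lra.
  rewrite hq in h.
  have : INR n / INR n.+1 * exp (/ INR n.+1) <= 1.
    have := Rmult_le_compat_r (exp (/ INR n.+1)) _ _ (Rlt_le _ _ hp) h.
    by rewrite Rinv_l; last lra.
  move=> h2; apply: (Rmult_le_reg_l (INR n / INR n.+1)).
    by apply: Rdiv_lt_0_compat.
  rewrite (_ : INR n / INR n.+1 * (INR n.+1 / INR n) = 1); first lra.
  field; lra.
have : exp (/ INR n.+1) ^ n.+1 <= (INR n.+1 / INR n) ^ n.+1.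
  apply: pow_incr; split => //; exact: Rlt_le (exp_pos _).
rewrite exp_pow_nat (_ : INR n.+1 * / INR n.+1 = 1) //; field; lra.
Qed.

Lemma fact_upper n : (1 <= n)%nat -> INR (n`!) * exp 1 ^ n.-1 <= INR n ^ n.+1.
Proof.
elim: n => [|n IH] hn //.
case: (ltnP n 1) => hn1.
  have -> : n = 0%nat by lia.
  by rewrite /= ; lra.
rewrite INR_fact_S.
have hpos : 0 <= INR n.+1 by apply: pos_INR.
have := IH hn1.
have -> : (n.+1).-1 = (n.-1).+1 by lia.
rewrite [exp 1 ^ (n.-1).+1]/= => h.
have h2 := pow_ratio_ge hn1.
have h3 : INR n.+1 * INR (n`!) * (exp 1 * exp 1 ^ n.-1)
   = INR n.+1 * exp 1 * (INR (n`!) * exp 1 ^ n.-1) by ring.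
rewrite h3.
have -> : INR n.+1 ^ (n.+1).+1 = INR n.+1 * INR n.+1 ^ n.+1 by [].
rewrite Rmult_assoc; apply: Rmult_le_compat_l => //.
apply: Rle_trans (_ : exp 1 * INR n ^ n.+1 <= _) => //.
apply: Rmult_le_compat_l => //; exact: Rlt_le (exp_pos _).
Qed.

Lemma fact_lower n : INR n ^ n <= exp 1 ^ n * INR (n`!).
Proof.
elim: n => [|n IH]; first by rewrite /=; lra.
rewrite INR_fact_S -!tech_pow_Rmult.
have hr : INR n.+1 ^ n <= exp 1 * INR n ^ n.
  case: (ltnP n 1) => hn.
    have -> : n = 0%nat by lia.
    have := exp_pos 1; have := exp_ineq1_le 1; rewrite /=; lra.
  exact: pow_ratio_le.
have hpos : 0 <= INR n.+1 by apply: pos_INR.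
have he := exp_pos 1.
apply: Rle_trans (_ : INR n.+1 * (exp 1 * INR n ^ n) <= _).
  by apply: Rmult_le_compat_l.
have : exp 1 * INR n ^ n <= exp 1 * (exp 1 ^ n * INR (n`!)).
  apply: Rmult_le_compat_l => //; lra.
move=> h; have := Rmult_le_compat_l _ _ _ hpos h; lra.
Qed.

Lemma shift4 N : (1 <= N)%nat -> INR (N + 4) ^ N <= exp 1 ^ (N + 4) * INR (N`!).
Proof.
move=> hN.
have hN' : 0 < INR N by apply: lt_0_INR; lia.
have h1 : INR (N + 4) = INR N * (1 + 4 / INR N).
  by rewrite plus_INR; simpl; field; lra.
rewrite h1 Rpow_mult_distr.
have h2 : (1 + 4 / INR N) ^ N <= exp 1 ^ 4.
  apply: Rle_trans (_ : exp (4 / INR N) ^ N <= _).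
    apply: pow_incr; split; last exact: exp_ineq1_le.
    have : 0 < 4 / INR N by apply: Rdiv_lt_0_compat; lra.
    lra.
  rewrite !exp_pow_nat; right; congr exp; simpl; field; lra.
have h3 := fact_lower N.
have hp1 : 0 <= INR N ^ N by apply: pow_le; lra.
have hp2 : 0 <= (1 + 4 / INR N) ^ N.
  apply: pow_le; have : 0 < 4 / INR N by apply: Rdiv_lt_0_compat; lra.
  lra.
rewrite pow_add.
have he : 0 <= exp 1 ^ 4 by apply: pow_le; have := exp_pos 1; lra.
apply: Rle_trans (_ : exp 1 ^ N * INR (N`!) * exp 1 ^ 4 <= _); last (right; ring).
apply: Rle_trans (_ : INR N ^ N * exp 1 ^ 4 <= _).
  by apply: Rmult_le_compat_l.
apply: Rmult_le_compat_r => //.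
Qed.

Lemma X_bound k T : (5 <= k)%nat -> 0 < T ->
  INR k * INR ((k - 4)`!) * T ^ (k - 1) <= 1 ->
  (T * INR k / exp 1) ^ (k - 1) <= exp 1 * INR k ^ 2.
Proof.
move=> hk hT hH.
have [N hN] : exists N, k = (N + 4)%nat by exists (k - 4)%nat; lia.
subst k.
have e1 : (N + 4 - 4)%nat = N by lia.
have e2 : (N + 4 - 1)%nat = (N + 3)%nat by lia.
rewrite e1 e2 in hH *.
have hsh := shift4 (_ : (1 <= N)%nat); rewrite -/(INR _) in hsh.
have hsh' := hsh ltac:(lia).
set k := INR (N + 4) in hH hsh' *.
set E := exp 1 in hsh' *.
have hE : 0 < E := exp_pos 1.
have hk0 : 0 < k by rewrite /k; apply: lt_0_INR; lia.
rewrite /Rdiv !Rpow_mult_distr pow_inv.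
have hEn : 0 < E ^ (N + 3) by apply: pow_lt.
have hkn : k ^ (N + 3) = k ^ N * k ^ 3 by rewrite pow_add.
have hEN : E ^ (N + 4) = E ^ (N + 3) * E.
  by rewrite (_ : (N + 4)%nat = (N + 3 + 1)%nat) ?pow_add /=; [ring | lia].
rewrite hEN in hsh'.
have hT3 : 0 <= T ^ (N + 3) by apply: pow_le; lra.
have hk3 : 0 <= k ^ 3 by apply: pow_le; lra.
rewrite hkn.
apply: (Rmult_le_reg_l (E ^ (N + 3))) => //.
have -> : E ^ (N + 3) * (T ^ (N + 3) * (k ^ N * k ^ 3) * / E ^ (N + 3))
   = T ^ (N + 3) * k ^ 3 * k ^ N by field; lra.
apply: Rle_trans (_ : T ^ (N + 3) * k ^ 3 * (E ^ (N + 3) * E * INR (N`!)) <= _).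
  apply: Rmult_le_compat_l => //; apply: Rmult_le_pos => //.
have -> : T ^ (N + 3) * k ^ 3 * (E ^ (N + 3) * E * INR N`!) =
    (E ^ (N + 3) * (E * k ^ 2)) * (k * INR N`! * T ^ (N + 3)).
  by simpl; ring.
rewrite -[X in _ <= X]Rmult_1_r.
apply: Rmult_le_compat_l => //.
apply: Rmult_le_pos; [lra | apply: Rmult_le_pos; [lra | apply: pow_le; lra]].
Qed.

Lemma exp_ge_pow x n : 0 <= x -> (0 < n)%nat -> (x / INR n) ^ n <= exp x.
Proof.
move=> hx hn.
have hn' : 0 < INR n by apply: lt_0_INR; lia.
have -> : exp x = exp (x / INR n) ^ n by rewrite exp_pow_nat; congr exp; field; lra.
apply: pow_incr; split.
  by apply: Rle_mult_inv_pos.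
have := exp_ineq1_le (x / INR n); lra.
Qed.

Lemma three_pow k : (1000 <= k)%nat -> exp 1 * INR k ^ 2 < 3 ^ (k - 1).
Proof.
move=> hk.
have hk' : 1000 <= INR k by have := le_INR _ _ (ltac:(lia) : (1000 <= k)%coq_nat); simpl; lra.
apply: Rle_lt_trans (_ : 3 * INR k ^ 2 < _).
  apply: Rmult_le_compat_r; first by apply: pow_le; lra.
  exact: exp_le_3.
apply: Rlt_le_trans (_ : (INR (k - 1) / INR 3) ^ 3 <= _).
  rewrite minus_INR; last lia.
  simpl; nra.
apply: Rle_trans (_ : exp (INR (k - 1)) <= _).
  apply: exp_ge_pow => //; exact: pos_INR.
rewrite -(Rmult_1_r (INR (k - 1))) -exp_pow_nat.
apply: pow_incr; split; first exact: Rlt_le (exp_pos 1).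
exact: exp_le_3.
Qed.

Lemma pow_dec7 j : (5 <= j)%nat -> INR j ^ 7 <= 5 ^ 7 * 4 ^ (j - 5).
Proof.
elim: j => [|j IH] hj; first by lia.
case: (ltnP j 5) => hj5.
  have -> : j = 4%nat by lia.
  by simpl; lra.
have := IH hj5.
have -> : (j.+1 - 5)%nat = (j - 5).+1 by lia.
have hj' : 5 <= INR j by have := le_INR _ _ (ltac:(lia) : (5 <= j)%coq_nat); simpl; lra.
have h1 : INR j.+1 ^ 7 <= 4 * INR j ^ 7.
  have : INR j.+1 <= 6 / 5 * INR j by rewrite S_INR; lra.
  move=> h; apply: Rle_trans (_ : (6 / 5 * INR j) ^ 7 <= _).
    apply: pow_incr; split => //; rewrite S_INR; lra.
  rewrite Rpow_mult_distr; apply: Rmult_le_compat_r; first by apply: pow_le; lra.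
  simpl; lra.
move=> h2; apply: Rle_trans h1 _.
rewrite [4 ^ (j - 5).+1]/=; lra.
Qed.

Lemma regime_low j k : (5 <= j)%nat -> (12 * j <= k)%nat ->
  INR j ^ (j + 2) * 3 ^ (j - 1) <= 6328125 * INR k ^ (j - 5).
Proof.
move=> hj hjk.
have [d hd] : exists d, j = (d + 5)%nat by exists (j - 5)%nat; lia.
subst j.
have -> : (d + 5 + 2)%nat = (7 + d)%nat by lia.
have -> : (d + 5 - 1)%nat = (4 + d)%nat by lia.
have -> : (d + 5 - 5)%nat = d by lia.
have h7 := pow_dec7 (_ : (5 <= d + 5)%nat); rewrite (_ : (d + 5 - 5)%nat = d) in h7; last lia.
have h7' := h7 ltac:(lia).
set J := INR (d + 5) in h7' *.
have hJ : 0 <= J by apply: pos_INR.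
have hkJ : 12 * J <= INR k.
  have := le_INR _ _ (ltac:(lia) : (12 * (d + 5) <= k)%coq_nat).
  rewrite mult_INR (_ : INR 12 = 12) //; simpl; ring.
rewrite !pow_add.
have -> : J ^ 7 * J ^ d * (3 ^ 4 * 3 ^ d) = 81 * J ^ 7 * (3 * J) ^ d.
  rewrite Rpow_mult_distr; simpl; ring.
apply: Rle_trans (_ : 81 * (5 ^ 7 * 4 ^ d) * (3 * J) ^ d <= _).
  apply: Rmult_le_compat_r; first by apply: pow_le; lra.
  lra.
apply: Rle_trans (_ : 6328125 * (12 * J) ^ d <= _).
  have -> : (12 * J) ^ d = 4 ^ d * (3 * J) ^ d.
    by rewrite -Rpow_mult_distr; congr pow; ring.
  right; simpl; ring.
apply: Rmult_le_compat_l; first lra.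
apply: pow_incr; lra.
Qed.

Lemma INR_ge (a b : nat) : (a <= b)%nat -> INR a <= INR b.
Proof. move=> h; apply: le_INR; lia. Qed.

Lemma regime_high k j y m : (1000 <= k)%nat -> y ^ 3 = INR k ->
  exp 1 * 364 ^ 28 <= y -> y < INR m + 1 -> (j + m + 1 <= k)%nat ->
  (k < 12 * j)%nat ->
  exp 1 * INR k ^ 9 * (INR j / INR k) ^ (j - 1) <= 1.
Proof.
move=> hk hy3 hY hym hjm hkj.
have hE := exp_pos 1.
have hk' : 1000 <= INR k by have := INR_ge (ltac:(lia) : (1000 <= k)%nat); simpl; lra.
have hy0 : 0 <= y.
  have : 0 <= 364 ^ 28 by apply: pow_le; lra.
  nra.
have hjk : INR j + INR m + 1 <= INR k.
  have := INR_ge hjm; rewrite !plus_INR; simpl; lra.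
have hm0 := pos_INR m.
have hj0 := pos_INR j.
have hr : INR j / INR k <= exp (- (y / INR k)).
  apply: Rle_trans (exp_ineq1_le _).
  apply: (Rmult_le_reg_r (INR k)); first lra.
  rewrite /Rdiv Rmult_assoc Rinv_l; last lra.
  have -> : (1 + - (y * / INR k)) * INR k = INR k - y by field; lra.
  lra.
have hr0 : 0 <= INR j / INR k by apply: Rle_mult_inv_pos; lra.
have h13 : INR k + 1 <= 13 * INR (j - 1).
  have := INR_ge (ltac:(lia) : (k + 1 <= 13 * (j - 1))%nat).
  by rewrite mult_INR plus_INR (_ : INR 13 = 13) //; simpl; ring.
have hpow : (INR j / INR k) ^ (j - 1) <= exp (- (y / 13)).
  apply: Rle_trans (_ : exp (- (y / INR k)) ^ (j - 1) <= _).
    by apply: pow_incr.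
  rewrite exp_pow_nat.
  destruct (Req_dec y 0) as [->|hy].
    right; congr exp; field; lra.
  left; apply: exp_increasing.
  apply: (Rmult_lt_reg_r (13 * INR k / y)).
    apply: Rdiv_lt_0_compat; lra.
  have -> : INR (j - 1) * - (y / INR k) * (13 * INR k / y) = - (13 * INR (j - 1)).
    by field; lra.
  have -> : - (y / 13) * (13 * INR k / y) = - INR k by field; lra.
  lra.
have hbig : exp 1 * y ^ 27 <= exp (y / 13).
  apply: Rle_trans (_ : (y / 13 / INR 28) ^ 28 <= _); last first.
    apply: exp_ge_pow; [lra | lia].
  have hc : 0 < 364 ^ 28 by apply: pow_lt; lra.
  have -> : y / 13 / INR 28 = y * / 364 by simpl; field.
  rewrite Rpow_mult_distr pow_inv (_ : 28%nat = (27 + 1)%nat) // pow_add pow_1.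
  have h27 : 0 <= y ^ 27 by apply: pow_le.
  rewrite Rmult_assoc [exp 1 * _]Rmult_comm.
  apply: Rmult_le_compat_l => //.
  apply: (Rmult_le_reg_r (364 ^ 28)) => //.
  rewrite Rmult_assoc Rinv_l; [lra | apply: Rgt_not_eq; apply: pow_lt; lra].
have hk9 : INR k ^ 9 = y ^ 27 by rewrite -hy3 -pow_mult.
rewrite hk9.
apply: Rle_trans (_ : exp 1 * y ^ 27 * exp (- (y / 13)) <= _).
  apply: Rmult_le_compat_l => //.
  apply: Rmult_le_pos; [lra | apply: pow_le; lra].
apply: Rle_trans (_ : exp (y / 13) * exp (- (y / 13)) <= _).
  apply: Rmult_le_compat_r => //; exact: Rlt_le (exp_pos _).
rewrite -exp_plus Rplus_opp_r exp_0; lra.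
Qed.

Lemma term_bound k T y m j :
  (1000 <= k)%nat -> 0 < T -> INR k * INR ((k - 4)`!) * T ^ (k - 1) <= 1 ->
  y ^ 3 = INR k -> exp 1 * 364 ^ 28 <= y -> y < INR m + 1 ->
  (4 <= j)%nat -> (j + m + 1 <= k)%nat ->
  INR j * INR (j`!) * T ^ (j - 1) <=
    (if j == 4%nat then 110592 / INR k ^ 3 else 6328125 / INR k ^ 4).
Proof.
move=> hk hT hH hy3 hY hym hj hjm.
have hE := exp_pos 1.
have hk' : 1000 <= INR k by have := INR_ge (ltac:(lia) : (1000 <= k)%nat); simpl; lra.
have hXk := @X_bound k T (ltac:(lia)) hT hH.
move: hXk; set X := T * INR k / exp 1 => hXk.
have hX0 : 0 <= X by apply: Rle_mult_inv_pos; nra.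
have hX3 : X <= 3.
  apply: Rnot_lt_le => hX.
  have := three_pow hk.
  have : 3 ^ (k - 1) <= X ^ (k - 1) by apply: pow_incr; lra.
  lra.
have hXj : X ^ (j - 1) <= exp 1 * INR k ^ 2.
  case: (Rle_lt_dec X 1) => hX1.
    apply: Rle_trans (_ : 1 ^ (j - 1) <= _); first by apply: pow_incr.
    rewrite pow1; have : 1 <= INR k ^ 2 by simpl; nra.
    have := exp_ineq1_le 1; nra.
  apply: Rle_trans hXk; apply: Rle_pow; [lra | lia].
have hj0 : 0 < INR j by apply: lt_0_INR; lia.
have hTk : T * INR k = exp 1 * X by rewrite /X; field; lra.
have hfu := fact_upper (ltac:(lia) : (1 <= j)%nat).
have ej : (j - 1)%nat = j.-1 by lia.
have hmain : INR j * INR (j`!) * T ^ (j - 1) * INR k ^ (j - 1) <=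
             INR j ^ (j + 2) * X ^ (j - 1).
  have -> : INR j * INR (j`!) * T ^ (j - 1) * INR k ^ (j - 1) =
            INR j * (INR (j`!) * exp 1 ^ (j - 1)) * X ^ (j - 1).
    rewrite Rmult_assoc -Rpow_mult_distr hTk Rpow_mult_distr; ring.
  rewrite ej.
  have -> : INR j ^ (j + 2) = INR j * INR j ^ j.+1.
    by rewrite (_ : (j + 2)%nat = (j.+1).+1) //; lia.
  apply: Rmult_le_compat_r; first by apply: pow_le.
  apply: Rmult_le_compat_l; lra.
have hkp : forall n, 0 < INR k ^ n by move=> n; apply: pow_lt; lra.
move: hmain; set t := INR j * INR (j`!) * T ^ (j - 1) => hmain.
case: eqP => hj4.
  subst j.
  apply: (Rmult_le_reg_r (INR k ^ 3)) => //.
  rewrite /Rdiv Rmult_assoc Rinv_l; last exact: Rgt_not_eq (hkp 3%nat).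
  apply: Rle_trans hmain _; simpl in hX3 |- *.
  have : X * (X * X) <= 27 by have := hX0; nra.
  simpl; nra.
have hj5 : (5 <= j)%nat by lia.
have hkd : INR k ^ (j - 1) = INR k ^ (j - 5) * INR k ^ 4.
  by rewrite -pow_add; congr pow; lia.
apply: (Rmult_le_reg_r (INR k ^ (j - 1))) => //.
rewrite hkd.
have -> : 6328125 / INR k ^ 4 * (INR k ^ (j - 5) * INR k ^ 4) =
          6328125 * INR k ^ (j - 5).
  field; lra.
rewrite -hkd.
case: (leqP (12 * j) k) => hjk.
  apply: Rle_trans hmain _.
  apply: Rle_trans _ (regime_low hj5 hjk).
  apply: Rmult_le_compat_l; first by apply: pow_le; lra.
  by apply: pow_incr.
have hr := regime_high hk hy3 hY hym hjm hjk.
have hjk' : INR j <= INR k by apply: INR_ge; lia.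
move: hr; set r := (INR j / INR k) ^ (j - 1) => hr.
have hr0 : 0 <= r by apply: pow_le; apply: Rle_mult_inv_pos; lra.
have hjpow : INR j ^ (j + 2) = INR j ^ 3 * r * INR k ^ (j - 1).
  rewrite /r /Rdiv Rpow_mult_distr pow_inv.
  rewrite (_ : (j + 2)%nat = (3 + (j - 1))%nat); last lia.
  rewrite pow_add; field; exact: Rgt_not_eq (hkp _).
apply: Rle_trans hmain _.
apply: Rle_trans (_ : INR j ^ (j + 2) * (exp 1 * INR k ^ 2) <= _).
  apply: Rmult_le_compat_l => //; apply: pow_le; lra.
rewrite hjpow hkd.
have hj3 : INR j ^ 3 <= INR k ^ 3 by apply: pow_incr; lra.
have hk5 : 0 <= INR k ^ (j - 5) by apply: pow_le; lra.
apply: Rle_trans (_ : INR k ^ 3 * r * (INR k ^ (j - 5) * INR k ^ 4) *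
                      (exp 1 * INR k ^ 2) <= _).
  apply: Rmult_le_compat_r; first by apply: Rmult_le_pos; [lra | apply: pow_le; lra].
  apply: Rmult_le_compat_r; first by apply: Rmult_le_pos => //; apply: pow_le; lra.
  by apply: Rmult_le_compat_r.
have -> : INR k ^ 3 * r * (INR k ^ (j - 5) * INR k ^ 4) * (exp 1 * INR k ^ 2)
   = (exp 1 * INR k ^ 9 * r) * INR k ^ (j - 5) by simpl; ring.
apply: Rle_trans (_ : 1 * INR k ^ (j - 5) <= _).
  by apply: Rmult_le_compat_r.
lra.
Qed.

Open Scope R_scope.

Lemma fold_le (l : list nat) (f g : nat -> R) :
  (forall j, List.In j l -> f j <= g j) ->
  List.fold_right Rplus 0 (List.map f l) <= List.fold_right Rplus 0 (List.map g l).
Proof.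
elim: l => [|a l IH] h /=; first lra.
apply: Rplus_le_compat; first by apply: h; left.
by apply: IH => j hj; apply: h; right.
Qed.

Lemma fold_nonneg (l : list nat) (f : nat -> R) :
  (forall j, List.In j l -> 0 <= f j) -> 0 <= List.fold_right Rplus 0 (List.map f l).
Proof.
move=> h; have := @fold_le l (fun _ => 0) f h.
suff -> : List.fold_right Rplus 0 (List.map (fun _ => 0) l) = 0 by [].
by elim: l {h} => [|a l IH] //=; rewrite IH; ring.
Qed.

Lemma fold_elem (l : list nat) (f : nat -> R) a :
  (forall j, List.In j l -> 0 <= f j) -> List.In a l ->
  f a <= List.fold_right Rplus 0 (List.map f l).
Proof.
elim: l => [|b l IH] h //= [<-|ha].
  have := fold_nonneg (fun j hj => h j (or_intror hj)); lra.
have := IH (fun j hj => h j (or_intror hj)) ha.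
have := h b (or_introl erefl); lra.
Qed.

Lemma fold_const5 s N a b : (5 <= s)%nat ->
  List.fold_right Rplus 0
    (List.map (fun j => if j == 4%nat then a else b) (List.seq s N)) = INR N * b.
Proof.
elim: N s => [|N IH] s hs; first by rewrite /=; ring.
rewrite S_INR /= IH; last lia.
have -> : (s == 4%nat) = false by apply/eqP; lia.
ring.
Qed.

Lemma fold_g N a b : 0 <= a -> 0 <= b ->
  List.fold_right Rplus 0
    (List.map (fun j => if j == 4%nat then a else b) (List.seq 4 N)) <= a + INR N * b.
Proof.
move=> ha hb; case: N => [|N].
  rewrite /=; nra.
rewrite S_INR /= fold_const5 //; have := pos_INR N; nra.
Qed.

Lemma INR_Z_to_nat z : IZR z <= INR (Z.to_nat z).
Proof.
case: (Z.le_gt_cases 0 z) => hz.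
  by rewrite INR_IZR_INZ Z2Nat.id //; right.
have := pos_INR (Z.to_nat z); have := IZR_lt _ _ hz; lra.
Qed.

Lemma lemma5p3_aux (tau : nat -> R)
  (Htau : forall k : nat, (4 <= k)%nat ->
     0 < tau k < 1 /\ derivable_pt_lim (Lambda k) (tau k) 1) :
  exists C : R, exists K : nat, forall k : nat, (K <= k)%nat ->
    Rabs (A_k tau k) <= C / (INR k ^ 3).
Proof.
pose Y0 := exp 1 * 364 ^ 28.
have hY0 : 0 < Y0 by apply: Rmult_lt_0_compat; [exact: exp_pos | apply: pow_lt; lra].
pose r := Y0 ^ 3 + 1000.
exists (110592 + 6328125), (Z.to_nat (up r)) => k hK.
have hr := archimed r.
have hkr : r < INR k.
  apply: Rlt_le_trans (_ : IZR (up r) <= _); first lra.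
  apply: Rle_trans (INR_Z_to_nat _) _; apply: INR_ge; lia.
have hY3 : 0 <= Y0 ^ 3 by apply: pow_le; lra.
have hk1000 : (1000 <= k)%nat.
  case: (leqP 1000 k) => // hk.
  have h := INR_ge (ltac:(lia) : (k <= 1000)%nat).
  have e : INR 1000 = 1000 by rewrite INR_IZR_INZ.
  exfalso; rewrite /r in hkr; lra.
have hk0 : 0 < INR k by rewrite /r in hkr; lra.
pose y := Rpower (INR k) (1 / 3).
have hy0 : 0 < y by rewrite /y /Rpower; exact: exp_pos.
have hy3 : y ^ 3 = INR k.
  rewrite -Rpower_pow // /y Rpower_mult (_ : 1 / 3 * INR 3 = 1).
    exact: Rpower_1.
  by simpl; field.
have hyY : Y0 <= y.
  apply: Rnot_lt_le => hlt.
  have : y ^ 3 <= Y0 ^ 3 by apply: pow_incr; lra.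
  rewrite /r in hkr; lra.
pose m := iota_k k.
have hym : y < INR m + 1.
  have [_ h] := base_Int_part y.
  have := INR_Z_to_nat (Int_part y).
  rewrite /m /iota_k -/y; lra.
have [[ht0 ht1] hd] := Htau k (ltac:(lia)).
pose T := tilde (tau k).
have hT : 0 < T by rewrite /T /tilde; apply: Rdiv_lt_0_compat; lra.
have hid := key_identity (conj ht0 ht1) hd.
have hnn : forall j, List.In j (List.seq 4 (k - 3)) ->
    0 <= INR j * INR (s_num j) * tilde (tau k) ^ (j - 1).
  move=> j _; apply: Rmult_le_pos; first by apply: Rmult_le_pos; apply: pos_INR.
  apply: pow_le; rewrite -/T; lra.
have hkin : List.In k (List.seq 4 (k - 3)) by apply/List.in_seq; lia.
have hkk := fold_elem hnn hkin.
rewrite hid in hkk.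
have hS : 1 - 4 * tau k + 2 * tau k ^ 2 <= 1 by simpl; nra.
have hH : INR k * INR ((k - 4)`!) * T ^ (k - 1) <= 1.
  have hs := INR_ge (s_lower (ltac:(lia) : (4 <= k)%nat)).
  have hTk : 0 <= T ^ (k - 1) by apply: pow_le; lra.
  apply: Rle_trans (_ : INR k * INR (s_num k) * T ^ (k - 1) <= _); last first.
    by rewrite /T; lra.
  apply: Rmult_le_compat_r => //; apply: Rmult_le_compat_l => //; lra.
have hbound : forall j, List.In j (List.seq 4 (k - m - 4)) ->
    INR j * INR (s_num j) * T ^ (j - 1) <=
    (if j == 4%nat then 110592 / INR k ^ 3 else 6328125 / INR k ^ 4).
  move=> j /List.in_seq hj.
  apply: Rle_trans (term_bound hk1000 hT hH hy3 hyY hym _ _); last 2 first.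
  - lia.
  - lia.
  have hTj : 0 <= T ^ (j - 1) by apply: pow_le; lra.
  apply: Rmult_le_compat_r => //; apply: Rmult_le_compat_l; first exact: pos_INR.
  apply: INR_ge; exact: s_num_le.
rewrite /A_k -/T.
rewrite Rabs_pos_eq; last first.
  apply: fold_nonneg => j _; apply: Rmult_le_pos; first by apply: Rmult_le_pos; apply: pos_INR.
  apply: pow_le; lra.
apply: Rle_trans (fold_le hbound) _.
have hc1 : 0 <= 110592 / INR k ^ 3 by apply: Rle_mult_inv_pos; [lra | apply: pow_lt; lra].
have hc2 : 0 <= 6328125 / INR k ^ 4 by apply: Rle_mult_inv_pos; [lra | apply: pow_lt; lra].
apply: Rle_trans (@fold_g (k - m - 4)%nat _ _ hc1 hc2) _.
have hN : INR (k - m - 4) <= INR k by apply: INR_ge; lia.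
have hk3 : 0 < INR k ^ 3 by apply: pow_lt.
have -> : INR k ^ 4 = INR k * INR k ^ 3 by simpl; ring.
have : INR (k - m - 4) * (6328125 / (INR k * INR k ^ 3)) <= 6328125 / INR k ^ 3.
  apply: (Rmult_le_reg_r (INR k * INR k ^ 3)); first nra.
  have -> : INR (k - m - 4) * (6328125 / (INR k * INR k ^ 3)) * (INR k * INR k ^ 3)
    = INR (k - m - 4) * 6328125 by field; lra.
  have -> : 6328125 / INR k ^ 3 * (INR k * INR k ^ 3) = INR k * 6328125 by field; lra.
  lra.
have -> : (110592 + 6328125) / INR k ^ 3 = 110592 / INR k ^ 3 + 6328125 / INR k ^ 3.
  by field; lra.
lra.
Qed.


Theorem lemma5p3 (tau : nat -> R)
  (Htau : forall k : nat, le 4 k ->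
     0 < tau k < 1 /\ derivable_pt_lim (Lambda k) (tau k) 1) :
  exists C : R, exists K : nat, forall k : nat, le K k ->
    Rabs (A_k tau k) <= C / (INR k ^ 3).
Proof.
have [C [K H]] := @lemma5p3_aux tau (fun k hk => Htau k (ltac:(lia))).
exists C, K => k hk; apply: H; lia.
Qed.
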